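(* An expanding map $\varphi:X\to X$ on a compact metrizable space $X$ is topologically free if and only if $X$ has no isolated points that are periodic for $\varphi$.
   Context: Expanding: there are a compatible metric $d$ and $\varepsilon>0,\theta>1$ with $d(\varphi x,\varphi y)\ge\theta d(x,y)$ whenever $d(x,y)<\varepsilon$. Topologically free: the set $\{x:\varphi^n(x)=x$ for some $n\ge1\}$ has empty interior. *)

(* Defs.v *)
From Stdlib Require Import Reals List.
Open Scope R_scope.

Section Topo.
Context {X : Type}.

Definition is_metric (d : X -> X -> R) : Prop :=
  (forall x y, 0 <= d x y) /\
  (forall x y, d x y = 0 <-> x = y) /\
  (forall x y, d x y = d y x) /\
  (forall x y z, d x z <= d x y + d y z).

Definition metric_open (d : X -> X -> R) (U : X -> Prop) : Prop :=
  forall x, U x -> exists r, 0 < r /\ forall y, d x y < r -> U y.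

Definition compatible_metric (opn : (X -> Prop) -> Prop) (d : X -> X -> R) : Prop :=
  is_metric d /\ forall U, opn U <-> metric_open d U.

Definition metrizable (opn : (X -> Prop) -> Prop) : Prop :=
  exists d, compatible_metric opn d.

Definition compact_space (opn : (X -> Prop) -> Prop) : Prop :=
  forall (I : Type) (U : I -> X -> Prop),
    (forall i, opn (U i)) -> (forall x, exists i, U i x) ->
    exists l : list I, forall x, exists i, In i l /\ U i x.

Definition continuous_map (opn : (X -> Prop) -> Prop) (f : X -> X) : Prop :=
  forall U, opn U -> opn (fun x => U (f x)).

Definition expanding (opn : (X -> Prop) -> Prop) (phi : X -> X) : Prop :=
  exists (d : X -> X -> R) (eps theta : R),
    compatible_metric opn d /\ 0 < eps /\ 1 < theta /\
    forall x y, d x y < eps -> theta * d x y <= d (phi x) (phi y).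

Definition periodic_pt (phi : X -> X) (x : X) : Prop :=
  exists n : nat, (1 <= n)%nat /\ Nat.iter n phi x = x.

Definition empty_interior (opn : (X -> Prop) -> Prop) (A : X -> Prop) : Prop :=
  forall U, opn U -> (forall x, U x -> A x) -> forall x, ~ U x.

Definition topologically_free (opn : (X -> Prop) -> Prop) (phi : X -> X) : Prop :=
  empty_interior opn (periodic_pt phi).

Definition isolated_pt (opn : (X -> Prop) -> Prop) (x : X) : Prop :=
  opn (fun y => y = x).

End Topo.

(* Main.v *)
Require Import Defs.
From Stdlib Require Import Reals List.
From Stdlib Require Import Arith Lra Lia Classical ClassicalEpsilon.
Open Scope R_scope.

Section Aux.
Variables (X : Type) (opn : (X -> Prop) -> Prop) (d : X -> X -> R).
Hypothesis H : compatible_metric opn d.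

Lemma d_pos x y : 0 <= d x y.
Proof. destruct H as [[h _] _]; apply h. Qed.
Lemma d_refl x : d x x = 0.
Proof. destruct H as [[_ [h _]] _]; apply h; reflexivity. Qed.
Lemma d_eq x y : d x y = 0 -> x = y.
Proof. destruct H as [[_ [h _]] _]; apply h. Qed.
Lemma d_sym x y : d x y = d y x.
Proof. destruct H as [[_ [_ [h _]]] _]; apply h. Qed.
Lemma d_tri x y z : d x z <= d x y + d y z.
Proof. destruct H as [[_ [_ [_ h]]] _]; apply h. Qed.

Lemma ball_open c r : opn (fun y => d c y < r).
Proof.
  apply (proj2 H). intros x Hx. exists (r - d c x). split; [lra|].
  intros y Hy. pose proof (d_tri c x y). lra.
Qed.

Lemma cball_compl_open c r : opn (fun y => r < d c y).
Proof.
  apply (proj2 H). intros x Hx. exists (d c x - r). split; [lra|].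
  intros y Hy. pose proof (d_tri c y x). rewrite (d_sym y x) in H0. lra.
Qed.

Lemma cont_metric f : continuous_map opn f -> forall x e, 0 < e ->
  exists del, 0 < del /\ forall w, d x w < del -> d (f x) (f w) < e.
Proof.
  intros Hc x e He.
  pose proof (Hc _ (ball_open (f x) e)) as Ho.
  apply (proj2 H) in Ho. destruct (Ho x) as [del [Hd Hw]].
  - simpl. rewrite d_refl. lra.
  - exists del. split; auto.
Qed.

Lemma iter_cont phi : continuous_map opn phi -> forall n, continuous_map opn (Nat.iter n phi).
Proof.
  intros Hc n. induction n; intros U HU.
  - exact HU.
  - exact (IHn _ (Hc U HU)).
Qed.

Lemma iter_close phi : continuous_map opn phi -> forall c m e, 0 < e ->
  exists del, 0 < del /\ forall w, d c w < del -> forall j, (j < m)%nat ->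
     d (Nat.iter j phi c) (Nat.iter j phi w) < e.
Proof.
  intros Hc c m e He. induction m.
  - exists 1. split; [lra|]. intros; lia.
  - destruct IHm as [d1 [Hd1 H1]].
    destruct (cont_metric _ (iter_cont _ Hc m) c e He) as [d2 [Hd2 H2]].
    exists (Rmin d1 d2). split. { apply Rmin_pos; auto. }
    intros w Hw j Hj.
    assert (d c w < d1) by (pose proof (Rmin_l d1 d2); lra).
    assert (d c w < d2) by (pose proof (Rmin_r d1 d2); lra).
    destruct (Nat.eq_dec j m) as [->|]; [apply H2; auto|apply H1; auto; lia].
Qed.

Lemma bern (t : R) (k : nat) : 1 < t -> 1 + INR k * (t - 1) <= t ^ k.
Proof.
  intros Ht. induction k.
  - simpl. lra.
  - rewrite S_INR. simpl. pose proof (pos_INR k).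
    assert (0 <= INR k * (t - 1)) by nra.
    assert (t * (1 + INR k * (t - 1)) <= t * t ^ k) by (apply Rmult_le_compat_l; lra).
    nra.
Qed.

End Aux.

Theorem mainTheorem19 (X : Type) (opn : (X -> Prop) -> Prop) (phi : X -> X) :
  metrizable opn -> compact_space opn ->
  continuous_map opn phi -> expanding opn phi ->
  (topologically_free opn phi <->
   ~ (exists x : X, isolated_pt opn x /\ periodic_pt phi x)).
Proof.
  intros _ Hcomp Hc [d [eps [theta [Hm [Heps [Hth Hexp]]]]]].
  split.
  { intros Hf [x [Hi Hp]]. apply (Hf _ Hi) with x; auto.
    intros y ->; auto. }
  intros Hno U HU HUp x0 Hx0.
  assert (Hstep : forall c r n, 0 < r -> (forall y, d c y < r -> U y) -> (1 <= n)%nat ->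
            exists y, d c y < r /\ Nat.iter n phi y <> y).
  { intros c r n Hr Hb Hn. apply NNPP. intros Hall.
    assert (Hfix : forall y, d c y < r -> Nat.iter n phi y = y).
    { intros y Hy. apply NNPP. intros Hne. apply Hall. exists y; auto. }
    destruct (iter_close _ _ _ Hm _ Hc c n eps Heps) as [del [Hdel Hcl]].
    assert (exists y, y <> c /\ d c y < Rmin del r) as [y [Hyc Hy]].
    { apply NNPP. intros Hne. apply Hno. exists c. split.
      - apply (proj2 Hm). intros z Hz. subst z. exists (Rmin del r).
        split. { apply Rmin_pos; auto. }
        intros w Hw. apply NNPP. intros Hwc. apply Hne. exists w. split; auto.
      - apply HUp. apply Hb. rewrite (d_refl _ _ _ Hm). lra. }
    assert (d c y < del) by (pose proof (Rmin_l del r); lra).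
    assert (d c y < r) by (pose proof (Rmin_r del r); lra).
    assert (Hall2 : forall k, d (Nat.iter k phi c) (Nat.iter k phi y) < eps).
    { intro k. induction k as [k IH] using lt_wf_ind.
      destruct (Nat.lt_ge_cases k n) as [Hk|Hk]. { apply Hcl; auto. }
      replace k with ((k - n) + n)%nat by lia.
      rewrite !Nat.iter_add. rewrite (Hfix c), (Hfix y); auto.
      - apply IH. lia.
      - rewrite (d_refl _ _ _ Hm). lra. }
    assert (Hgrow : forall k, theta ^ k * d c y <= d (Nat.iter k phi c) (Nat.iter k phi y)).
    { induction k. { simpl. lra. }
      simpl. pose proof (Hexp _ _ (Hall2 k)). nra. }
    assert (Hpos : 0 < d c y).
    { destruct (d_pos _ _ _ Hm c y) as [|He]; auto.
      exfalso. apply Hyc. symmetry. apply (d_eq _ _ _ Hm). auto. }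
    destruct (archimed (eps / (d c y * (theta - 1)))) as [Ha _].
    assert (0 <= IZR (up (eps / (d c y * (theta - 1))))).
    { apply Rle_trans with (eps / (d c y * (theta - 1))); [|lra].
      apply Rlt_le. apply Rdiv_lt_0_compat; nra. }
    destruct (IZN (up (eps / (d c y * (theta - 1))))) as [k Hk].
    { apply le_IZR. auto. }
    rewrite Hk, <- INR_IZR_INZ in Ha.
    pose proof (bern theta k Hth). pose proof (Hgrow k). pose proof (Hall2 k).
    assert (eps < INR k * (d c y * (theta - 1))).
    { apply Rmult_lt_reg_r with (/ (d c y * (theta - 1))).
      { apply Rinv_0_lt_compat; nra. }
      rewrite Rmult_assoc, Rinv_r by nra. unfold Rdiv in Ha. lra. }
    nra. }
  pose (P := fun (p : X * R) => 0 < snd p /\ forall y, d (fst p) y < snd p -> U y).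
  assert (Hstep2 : forall (k : nat) (p : X * R), exists q : X * R,
     P p -> P q /\ (forall y, d (fst q) y <= snd q -> d (fst p) y < snd p)
          /\ (forall y, d (fst q) y <= snd q -> Nat.iter (S k) phi y <> y)).
  { intros k [c r].
    destruct (classic (P (c, r))) as [HP|HP]; [|exists (c, r); tauto].
    destruct HP as [Hr Hb]. simpl in Hr, Hb.
    destruct (Hstep c r (S k) Hr Hb ltac:(lia)) as [y [Hy Hny]].
    assert (Hop : exists s, 0 < s /\ forall w, d y w < s ->
               d c w < r /\ Nat.iter (S k) phi w <> w).
    { pose (F := Nat.iter (S k) phi).
      assert (Hdp : 0 < d (F y) y).
      { destruct (d_pos _ _ _ Hm (F y) y) as [|He]; auto.
        exfalso. apply Hny. apply (d_eq _ _ _ Hm). auto. }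
      destruct (cont_metric _ _ _ Hm F (iter_cont _ _ phi Hc (S k)) y
                  (d (F y) y / 2) ltac:(lra)) as [s1 [Hs1 H1]].
      exists (Rmin s1 (Rmin (d (F y) y / 2) (r - d c y))).
      split. { repeat apply Rmin_pos; lra. }
      intros w Hw.
      pose proof (Rmin_l s1 (Rmin (d (F y) y / 2) (r - d c y))).
      pose proof (Rmin_r s1 (Rmin (d (F y) y / 2) (r - d c y))).
      pose proof (Rmin_l (d (F y) y / 2) (r - d c y)).
      pose proof (Rmin_r (d (F y) y / 2) (r - d c y)).
      split.
      - pose proof (d_tri _ _ _ Hm c y w). lra.
      - intros Hfw. fold F in Hfw.
        pose proof (H1 w ltac:(lra)) as Hc1.
        pose proof (d_tri _ _ _ Hm (F y) (F w) y) as Ht. rewrite Hfw in Ht, Hc1.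
        rewrite (d_sym _ _ _ Hm w y) in Ht. lra. }
    destruct Hop as [s [Hs Hsw]].
    exists (y, s / 2). intros _. simpl. split; [|split].
    - split; simpl; [lra|]. intros w Hw. apply Hb. apply Hsw. lra.
    - intros w Hw. apply Hsw. lra.
    - intros w Hw. apply Hsw. lra. }
  destruct (proj1 (proj2 Hm U) HU x0 Hx0) as [r0 [Hr0 Hb0]].
  pose (g := fun k p => proj1_sig (constructive_indefinite_description _ (Hstep2 k p))).
  assert (Hg : forall k p, P p -> P (g k p) /\
     (forall y, d (fst (g k p)) y <= snd (g k p) -> d (fst p) y < snd p)
     /\ (forall y, d (fst (g k p)) y <= snd (g k p) -> Nat.iter (S k) phi y <> y)).
  { intros k p Hp. unfold g.
    destruct (constructive_indefinite_description _ (Hstep2 k p)) as [q Hq].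
    simpl. auto. }
  pose (s := fix s k := match k with O => (x0, r0) | S k' => g k' (s k') end).
  assert (HP : forall k, P (s k)).
  { induction k. { split; simpl; auto. } apply (Hg k (s k) IHk). }
  pose (K := fun k y => d (fst (s k)) y <= snd (s k)).
  assert (Hnest1 : forall k y, K (S k) y -> K k y).
  { intros k y Hy. apply Rlt_le. apply (proj1 (proj2 (Hg k (s k) (HP k)))). exact Hy. }
  assert (Hnest : forall k m y, (k <= m)%nat -> K m y -> K k y).
  { intros k m y Hkm. induction Hkm; auto. }
  assert (Hz : exists z, forall k, K k z).
  { apply NNPP. intros Hne.
    destruct (Hcomp nat (fun i y => snd (s i) < d (fst (s i)) y)) as [l Hl].
    - intro i. apply (cball_compl_open _ _ _ Hm).
    - intro y. apply NNPP. intros Hy. apply Hne. exists y. intro k.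
      unfold K. apply Rnot_lt_le. intros Hlt. apply Hy. exists k. auto.
    - pose (N := fold_right max O l).
      assert (HN : forall i, In i l -> (i <= N)%nat).
      { unfold N. clear. induction l; simpl; intros i Hi. { contradiction. }
        destruct Hi as [->|Hi]; [lia|]. specialize (IHl i Hi). lia. }
      destruct (Hl (fst (s N))) as [i [Hi Hlt]].
      assert (K N (fst (s N))).
      { unfold K. rewrite (d_refl _ _ _ Hm). destruct (HP N); lra. }
      pose proof (Hnest i N _ (HN i Hi) H). unfold K in H0. lra. }
  destruct Hz as [z Hz].
  assert (U z).
  { apply Hb0. apply (proj1 (proj2 (Hg 0%nat (s 0%nat) (HP 0%nat)))). apply (Hz 1%nat). }
  destruct (HUp z H) as [n [Hn Hfz]].
  destruct n as [|n]; [lia|].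
  apply (proj2 (proj2 (Hg n (s n) (HP n))) z (Hz (S n))). exact Hfz.
Qed.
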